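(* Let $\mathbb{F}_q$ be a finite field, $G_4=UU_4(\mathbb{F}_q)$ the group of $4\times 4$ upper triangular unipotent matrices over $\mathbb{F}_q$, and $N_2=\{A=(a_{ij})\in G_4: a_{23}=0,\ a_{12}a_{34}\ne 0\}$. Define an equivalence relation $R$ on $N_2$ by $yRz$ iff $C_{G_4}(y)=C_{G_4}(z)$. Then the set \[X_{N_2}=\{A=(a_{ij})\in G_4: a_{12}=1,\ a_{13}=x_{13},\ a_{14}=0,\ a_{23}=0,\ a_{24}=x_{24},\ a_{34}=x_{34},\ x_{34}\in\mathbb{F}_q^*,\ x_{13},x_{24}\in\mathbb{F}_q\}\] contains exactly one element of each $R$-equivalence class of $N_2$, and $|X_{N_2}|=q^2(q-1)$.
   Context: $C_{G_4}(y)$ denotes the centralizer of $y$ in $G_4$. *)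

(* Defs.v *)
From HB Require Import structures.
From mathcomp Require Import all_boot all_order all_algebra all_fingroup all_field.
Set Implicit Arguments. Unset Strict Implicit. Unset Printing Implicit Defensive.
Import GRing.Theory.
Local Open Scope ring_scope.

Section UU4.
Variable F : finFieldType.

(* 1-based entry access: ent A i j = a_{ij}, for 1 <= i, j <= 4 *)
Definition ent (A : 'M[F]_4) (i j : nat) : F := A (@inord 3 i.-1) (@inord 3 j.-1).

Definition G4 : {set 'M[F]_4} :=
  [set A : 'M[F]_4 | [forall i : 'I_4, forall j : 'I_4,
      ((j < i)%N ==> (A i j == 0)) && ((i == j) ==> (A i j == 1))]].

Definition centG4 (y : 'M[F]_4) : {set 'M[F]_4} :=
  [set g in G4 | g *m y == y *m g].

Definition Rrel (y z : 'M[F]_4) : Prop := centG4 y = centG4 z.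

Definition N2 : {set 'M[F]_4} :=
  [set A in G4 | [&& ent A 2 3 == 0, ent A 1 2 != 0 & ent A 3 4 != 0]].

Definition X_N2 : {set 'M[F]_4} :=
  [set A in G4 | [&& ent A 1 2 == 1, ent A 1 4 == 0, ent A 2 3 == 0
                   & ent A 3 4 != 0]].
End UU4.

(* Main.v *)
Require Import Defs.
From HB Require Import structures.
From mathcomp Require Import all_boot all_order all_algebra all_fingroup all_field.
From mathcomp Require Import ring.
Set Implicit Arguments. Unset Strict Implicit. Unset Printing Implicit Defensive.
Import GRing.Theory.
Local Open Scope ring_scope.

Section S.
Variable F : finFieldType.

Definition mkf (a1 a2 a3 a4 a5 a6 : F) (i j : nat) : F :=
 match i, j with
 | 0,0 | 1,1 | 2,2 | 3,3 => 1
 | 0,1 => a1 | 0,2 => a2 | 0,3 => a3 | 1,2 => a4 | 1,3 => a5 | 2,3 => a6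
 | _,_ => 0 end.
Definition mk a1 a2 a3 a4 a5 a6 : 'M[F]_4 := \matrix_(i,j) mkf a1 a2 a3 a4 a5 a6 i j.

Lemma mul_mk a1 a2 a3 a4 a5 a6 b1 b2 b3 b4 b5 b6 :
  mk a1 a2 a3 a4 a5 a6 *m mk b1 b2 b3 b4 b5 b6 =
  mk (a1+b1) (a2 + a1*b4 + b2) (a3 + a1*b5 + a2*b6 + b3) (a4+b4) (a5 + a4*b6 + b5) (a6+b6).
Proof.
apply/matrixP => i j; rewrite !mxE !big_ord_recr big_ord0 /= !mxE.
case: i => [[|[|[|[|i]]]] Hi] //; case: j => [[|[|[|[|j]]]] Hj] //=; ring.
Qed.

Lemma G4_mk (A : 'M[F]_4) : A \in G4 F ->
  A = mk (ent A 1 2) (ent A 1 3) (ent A 1 4) (ent A 2 3) (ent A 2 4) (ent A 3 4).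
Proof.
rewrite inE => /forallP H; apply/matrixP => i j; have := forallP (H i) j.
rewrite mxE /ent.
case: i => [[|[|[|[|i]]]] Hi] //; case: j => [[|[|[|[|j]]]] Hj] //=.
all: first [ by move/eqP | by rewrite andbT => /eqP
  | by move=> _; congr (A _ _); apply/val_inj; rewrite /= inordK ].
Qed.

Lemma mk_G4 a1 a2 a3 a4 a5 a6 : mk a1 a2 a3 a4 a5 a6 \in G4 F.
Proof.
rewrite inE; apply/forallP => i; apply/forallP => j; rewrite mxE.
by case: i => [[|[|[|[|i]]]] Hi] //; case: j => [[|[|[|[|j]]]] Hj] //=; rewrite eqxx.
Qed.

Lemma ent_mk a1 a2 a3 a4 a5 a6 (A := mk a1 a2 a3 a4 a5 a6) :
  (ent A 1 2 = a1 /\ ent A 1 3 = a2 /\ ent A 1 4 = a3) /\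
  (ent A 2 3 = a4 /\ ent A 2 4 = a5 /\ ent A 3 4 = a6).
Proof. by rewrite /A /ent !mxE !inordK. Qed.

Lemma mk_inj a1 a2 a3 a4 a5 a6 b1 b2 b3 b4 b5 b6 :
  mk a1 a2 a3 a4 a5 a6 = mk b1 b2 b3 b4 b5 b6 ->
  (a1 = b1 /\ a2 = b2 /\ a3 = b3) /\ (a4 = b4 /\ a5 = b5 /\ a6 = b6).
Proof.
move=> E; have [[e1 [e2 e3]] [e4 [e5 e6]]] := ent_mk a1 a2 a3 a4 a5 a6.
have [[f1 [f2 f3]] [f4 [f5 f6]]] := ent_mk b1 b2 b3 b4 b5 b6.
rewrite E in e1 e2 e3 e4 e5 e6.
by rewrite -e1 -e2 -e3 -e4 -e5 -e6 f1 f2 f3 f4 f5 f6.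
Qed.

Lemma eq_via (X Y c1 c2 : F) : c1 = c2 -> X - Y = c1 - c2 -> X = Y.
Proof. by move=> H E; apply/eqP; rewrite -subr_eq0 E H subrr. Qed.

Lemma comm_mk g1 g2 g3 g4 g5 g6 y1 y2 y3 y4 y5 y6 :
  mk g1 g2 g3 g4 g5 g6 *m mk y1 y2 y3 y4 y5 y6 = mk y1 y2 y3 y4 y5 y6 *m mk g1 g2 g3 g4 g5 g6 <->
  [/\ g1*y4 = y1*g4, g4*y6 = y4*g6 & g1*y5 + g2*y6 = y1*g5 + y2*g6].
Proof.
rewrite !mul_mk; split.
  move=> /mk_inj [[_ [E2 E3]] [_ [E5 _]]]; split.
  - by apply: (eq_via E2); ring.
  - by apply: (eq_via E5); ring.
  - by apply: (eq_via E3); ring.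
move=> [H1 H2 H3]; congr mk; first [ring | by apply: (eq_via H1); ring
  | by apply: (eq_via H2); ring | by apply: (eq_via H3); ring].
Qed.


Lemma e12 a1 a2 a3 a4 a5 a6 : ent (mk a1 a2 a3 a4 a5 a6) 1 2 = a1.
Proof. by rewrite /ent !mxE !inordK. Qed.
Lemma e13 a1 a2 a3 a4 a5 a6 : ent (mk a1 a2 a3 a4 a5 a6) 1 3 = a2.
Proof. by rewrite /ent !mxE !inordK. Qed.
Lemma e14 a1 a2 a3 a4 a5 a6 : ent (mk a1 a2 a3 a4 a5 a6) 1 4 = a3.
Proof. by rewrite /ent !mxE !inordK. Qed.
Lemma e23 a1 a2 a3 a4 a5 a6 : ent (mk a1 a2 a3 a4 a5 a6) 2 3 = a4.
Proof. by rewrite /ent !mxE !inordK. Qed.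
Lemma e24 a1 a2 a3 a4 a5 a6 : ent (mk a1 a2 a3 a4 a5 a6) 2 4 = a5.
Proof. by rewrite /ent !mxE !inordK. Qed.
Lemma e34 a1 a2 a3 a4 a5 a6 : ent (mk a1 a2 a3 a4 a5 a6) 3 4 = a6.
Proof. by rewrite /ent !mxE !inordK. Qed.

Lemma in_cent_mk g1 g2 g3 g4 g5 g6 y1 y2 y3 y4 y5 y6 :
  (mk g1 g2 g3 g4 g5 g6 \in centG4 (mk y1 y2 y3 y4 y5 y6)) =
  [&& g1*y4 == y1*g4, g4*y6 == y4*g6 & g1*y5 + g2*y6 == y1*g5 + y2*g6].
Proof.
rewrite inE mk_G4 /=.
apply/idP/idP => [/eqP/comm_mk [h1 h2 h3]|/and3P[/eqP h1 /eqP h2 /eqP h3]].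
  by rewrite h1 h2 h3 !eqxx.
by apply/eqP/comm_mk; split.
Qed.

Lemma in_cent g y1 y2 y3 y4 y5 y6 :
  (g \in centG4 (mk y1 y2 y3 y4 y5 y6)) =
  (g \in G4 F) && [&& ent g 1 2 * y4 == y1 * ent g 2 3,
     ent g 2 3 * y6 == y4 * ent g 3 4 &
     ent g 1 2 * y5 + ent g 1 3 * y6 == y1 * ent g 2 4 + y2 * ent g 3 4].
Proof.
case Hg: (g \in G4 F); last by rewrite inE Hg.
by rewrite /= {1}(G4_mk Hg) in_cent_mk.
Qed.

Lemma eq_via2 (X Y c1 c2 k : F) : c1 = c2 -> X - Y = (c1 - c2) * k -> X = Y.
Proof. by move=> H E; apply/eqP; rewrite -subr_eq0 E H subrr mul0r. Qed.

Lemma rep_cent y1 y2 y3 y5 y6 : y1 != 0 -> y6 != 0 ->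
  centG4 (mk y1 y2 y3 0 y5 y6) = centG4 (mk 1 (y2/y1) 0 0 (y5/y1) (y6/y1)).
Proof.
move=> n1 n6; apply/setP => g; rewrite !in_cent; case: (g \in G4 F) => //=.
have n61 : y6 / y1 != 0 by rewrite mulf_neq0 ?invr_neq0.
rewrite !(mulr0, mul0r, mul1r) ![0 == _]eq_sym !mulf_eq0 (negbTE n1) (negbTE n6) invr_eq0 (negbTE n1) !orbF.
congr (_ && (_ && _)); apply/eqP/eqP => h.
  by apply: (eq_via2 (k := y1^-1) h); field.
by apply: (eq_via2 (k := y1) h); field.
Qed.

Lemma rep_uniq u v w u' v' w' :
  centG4 (mk 1 u 0 0 v w) = centG4 (mk 1 u' 0 0 v' w') -> u = u' /\ v = v' /\ w = w'.
Proof.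
move=> E.
have P g : (g \in centG4 (mk 1 u 0 0 v w)) = (g \in centG4 (mk 1 u' 0 0 v' w')) by rewrite E.
have := P (mk 1 0 0 0 v 0); have := P (mk 0 1 0 0 w 0); have := P (mk 0 0 0 0 (-u) 1).
rewrite !in_cent_mk !(mulr0, mul0r, mul1r, mulr1, addr0, add0r, eqxx) /=.
rewrite addNr eqxx => /esym/eqP h1 /esym/eqP h2 /esym/eqP h3.
move/eqP: h1; rewrite eq_sym addrC subr_eq0 => /eqP h1.
by rewrite h1 h2 h3.
Qed.
End S.

Theorem lemma4p7 (F : finFieldType) :
  X_N2 F \subset N2 F /\
  (forall y, y \in N2 F -> exists! x, x \in X_N2 F /\ Rrel y x) /\
  #|X_N2 F| = (#|F| ^ 2 * (#|F| - 1))%N.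
Proof.
split.
  apply/subsetP => A; rewrite !inE => /andP[-> /and4P[/eqP-> _ -> ->]].
  by rewrite oner_neq0.
split.
  move=> y; rewrite inE => /andP[/G4_mk Ey /and3P[/eqP h23 h12 h34]].
  move: h12 h34; rewrite Ey h23.
  move: (ent y 1 2) (ent y 1 3) (ent y 1 4) (ent y 2 4) (ent y 3 4) => y1 y2 y3 y5 y6 n1 n6.
  rewrite e12 in n1; rewrite e34 in n6.
  exists (mk 1 (y2/y1) 0 0 (y5/y1) (y6/y1)); split.
    split; last by rewrite /Rrel; apply: rep_cent.

    by rewrite inE mk_G4 e12 e14 e23 e34 !eqxx /= mulf_neq0 ?invr_neq0.
  move=> x [Hx Rx].
  move: Hx; rewrite inE => /andP[/G4_mk Ex /and4P[/eqP a12 /eqP a14 /eqP a23 _]].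
  have R' : centG4 (mk y1 y2 y3 0 y5 y6) = centG4 x := Rx.
  rewrite Ex a12 a14 a23 in R' *.
  have [-> [-> ->]] := rep_uniq (etrans (esym (rep_cent y2 y3 y5 n1 n6)) R').
  by [].
pose f := fun p : F * F * F => mk 1 p.1.1 0 0 p.1.2 p.2.
have fi : injective f.
  by move=> [[a b] c] [[a' b'] c']; rewrite /f /= => /mk_inj [[_ [-> _]] [_ [-> ->]]].
have -> : X_N2 F = f @: [set p : F * F * F | p.2 != 0].
  apply/setP => A; rewrite inE; apply/idP/imsetP.
    case/andP => /G4_mk EA /and4P[/eqP a12 /eqP a14 /eqP a23 a34].
    exists (ent A 1 3, ent A 2 4, ent A 3 4); first by rewrite inE.
    by rewrite /f /= {1}EA a12 a14 a23.
  case=> [[[a b] c]]; rewrite inE /= => hc ->.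
  by rewrite mk_G4 e12 e14 e23 e34 !eqxx.
rewrite card_imset //.
have -> : [set p : F * F * F | p.2 != 0] = setX [set: F * F] [set~ 0].
  by apply/setP => -[p c]; rewrite !inE.
by rewrite cardsX cardsT card_prod cardsC1 mulnn subn1.
Qed.
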